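(* Let $\mathbb{F}$ be a field with $\mathrm{char}(\mathbb{F})\neq 2,3$. Every proper ideal of $\hat{\mathcal{H}}$ is contained in the radical $R(\hat{\mathcal{H}})$; in particular, no proper ideal of $\hat{\mathcal{H}}$ contains any of the axes $a_i$, $i\in\mathbb{Z}$.
   Context: Notation: $\mathbb{N}=\{1,2,3,\dots\}$, $3\mathbb{N}=\{3,6,9,\dots\}$; for $r\in\mathbb{Z}$, $\bar r=r+3\mathbb{Z}\in\mathbb{Z}_3$. The algebra $\hat{\mathcal{H}}$ is the commutative $\mathbb{F}$-algebra with basis $\{a_i:i\in\mathbb{Z}\}\cup\{s_j:j\in\mathbb{N}\}\cup\{p_{\bar r,k}:\bar r\in\{\bar1,\bar2\},\ k\in 3\mathbb{N}\}$, where $s_0=0$, $p_{\bar r,j}=0$ for all $\bar r$ whenever $j\notin 3\mathbb{N}$, $p_{\bar 0,j}=-p_{\bar1,j}-p_{\bar2,j}$, $z_{\bar r,j}=p_{\bar r+\bar1,j}-p_{\bar r-\bar1,j}$, and for $i,i'\in\mathbb{Z}$, $j,l\in\mathbb{N}$, $h,k\in3\mathbb{N}$, $\bar r,\bar t\in\mathbb{Z}_3$: (H1) $a_ia_{i'}=\tfrac12(a_i+a_{i'})+s_{|i-i'|}+z_{\bar\imath,|i-i'|}$; (H2) $a_is_j=-\tfrac34a_i+\tfrac38(a_{i-j}+a_{i+j})+\tfrac32 s_j-z_{\bar\imath,j}$; (H3) $a_ip_{\bar r,k}=\tfrac32p_{\bar r,k}-p_{-(\bar\imath+\bar r),k}$;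 (H4) $s_js_l=\tfrac34(s_j+s_l)-\tfrac38(s_{|j-l|}+s_{j+l})$; (H5) $s_jp_{\bar r,k}=\tfrac34(p_{\bar r,j}+p_{\bar r,k})-\tfrac38(p_{\bar r,|j-k|}+p_{\bar r,j+k})$; (H6) $p_{\bar r,h}p_{\bar t,k}=\tfrac14(z_{-(\bar r+\bar t),h}+z_{-(\bar r+\bar t),k})-\tfrac18(z_{-(\bar r+\bar t),|h-k|}+z_{-(\bar r+\bar t),h+k})$. The $a_i$ are the axes of $\hat{\mathcal{H}}$. The radical $R(\hat{\mathcal{H}})$ is the unique largest ideal of $\hat{\mathcal{H}}$ containing none of the axes $a_i$. *)

(* Defs.v *)
(* The algebra \hat{H} over a field F, presented concretely:
   elements are F-valued coefficient functions on the basis index type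
   [basis] that arise as finite linear combinations [lc l] of basis
   elements; the product is the bilinear extension of the table (H1)-(H6). *)
From HB Require Import structures.
From mathcomp Require Import all_boot all_order all_algebra.
Set Implicit Arguments. Unset Strict Implicit. Unset Printing Implicit Defensive.
Import Order.TTheory GRing.Theory Num.Theory.
Local Open Scope ring_scope.

(* Basis indices:
     inl (inl i)        ~ a_i            (i : int)
     inl (inr j)        ~ s_(j+1)        (so j ranges over N = {1,2,...})
     inr (false, k)     ~ p_(1bar, 3(k+1))
     inr (true,  k)     ~ p_(2bar, 3(k+1))  (so k ranges over 3N) *)
Definition basis : Type := ((int + nat) + (bool * nat))%type.

Definition bA (i : int) : basis := inl (inl i).
Definition bS (j : nat) : basis := inl (inr j).
Definition bP (r : bool) (k : nat) : basis := inr (r, k).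

Section Hhat.
Variable F : fieldType.

Definition fsum := seq (F * basis).

Definition lc (l : fsum) : basis -> F :=
  fun b => \sum_(x <- l) (if x.2 == b then x.1 else 0).

Definition scl (c : F) (l : fsum) : fsum := [seq (c * x.1, x.2) | x <- l].

Definition half : F := (2%:R)^-1.

Definition av (i : int) : fsum := [:: (1, bA i)].
(* s_j for j : nat, with s_0 = 0 *)
Definition sv (j : nat) : fsum := if j is j'.+1 then [:: (1, bS j')] else [::].
(* p_{rbar, j} for r : int, j : nat; zero unless j in 3N;
   p_{0bar,j} = - p_{1bar,j} - p_{2bar,j} *)
Definition pv (r : int) (j : nat) : fsum :=
  if (0 < j)%N && (3 %| j)%N then
    let k := (j %/ 3).-1 in
    match absz (r %% 3)%Z with
    | 0%N => [:: (-1, bP false k); (-1, bP true k)]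
    | 1%N => [:: (1, bP false k)]
    | _ => [:: (1, bP true k)]
    end
  else [::].
Definition zv (r : int) (j : nat) : fsum := pv (r + 1) j ++ scl (-1) (pv (r - 1) j).

Definition mulB (x y : basis) : fsum :=
  match x, y with
  | inl (inl i), inl (inl i') =>
      scl half (av i ++ av i') ++ sv (absz (i - i')) ++ zv i (absz (i - i'))
  | inl (inl i), inl (inr j') | inl (inr j'), inl (inl i) =>
      let j := j'.+1 in
      scl (- (3%:R / 4%:R)) (av i)
      ++ scl (3%:R / 8%:R) (av (i - j%:Z) ++ av (i + j%:Z))
      ++ scl (3%:R / 2%:R) (sv j) ++ scl (-1) (zv i j)
  | inl (inl i), inr (rb, k') | inr (rb, k'), inl (inl i) =>
      let r : int := if rb then 2 else 1 in
      let k := (3 * k'.+1)%N in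
      scl (3%:R / 2%:R) (pv r k) ++ scl (-1) (pv (- (i + r)) k)
  | inl (inr j'), inl (inr l') =>
      let j := j'.+1 in let l := l'.+1 in
      scl (3%:R / 4%:R) (sv j ++ sv l)
      ++ scl (- (3%:R / 8%:R)) (sv (absz (j%:Z - l%:Z)) ++ sv (j + l))
  | inl (inr j'), inr (rb, k') | inr (rb, k'), inl (inr j') =>
      let j := j'.+1 in
      let r : int := if rb then 2 else 1 in
      let k := (3 * k'.+1)%N in
      scl (3%:R / 4%:R) (pv r j ++ pv r k)
      ++ scl (- (3%:R / 8%:R)) (pv r (absz (j%:Z - k%:Z)) ++ pv r (j + k))
  | inr (rb, h'), inr (tb, k') =>
      let r : int := if rb then 2 else 1 in
      let t : int := if tb then 2 else 1 in
      let h := (3 * h'.+1)%N in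
      let k := (3 * k'.+1)%N in
      let q := - (r + t) in
      scl (4%:R)^-1 (zv q h ++ zv q k)
      ++ scl (- (8%:R)^-1) (zv q (absz (h%:Z - k%:Z)) ++ zv q (h + k))
  end.

Definition mulL (l m : fsum) : fsum :=
  flatten [seq flatten [seq scl (x.1 * y.1) (mulB x.2 y.2) | y <- m] | x <- l].

Definition vec := basis -> F.
Definition inH (v : vec) : Prop := exists l : fsum, v = lc l.
Definition axis (i : int) : vec := lc (av i).

(* ideals of \hat{H}: F-subspaces of \hat{H} closed under multiplication
   by arbitrary elements of \hat{H} (the algebra is commutative) *)
Definition is_idealH (I : vec -> Prop) : Prop :=
  [/\ (forall v, I v -> inH v),
      I (fun _ => 0),
      (forall u v, I u -> I v -> I (fun b => u b + v b)),
      (forall (c : F) u, I u -> I (fun b => c * u b)) &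
      (forall l m : fsum, I (lc l) -> I (lc (mulL l m)))].

Definition proper_idealH (I : vec -> Prop) : Prop :=
  is_idealH I /\ exists v, inH v /\ ~ I v.

Definition axis_free (I : vec -> Prop) : Prop := forall i : int, ~ I (axis i).

Definition is_radical (R : vec -> Prop) : Prop :=
  [/\ is_idealH R, axis_free R &
      forall J, is_idealH J -> axis_free J -> forall v, J v -> R v].

End Hhat.

(* Main.v *)
Require Import Defs.
From HB Require Import structures.
From mathcomp Require Import all_boot all_order all_algebra.
From mathcomp Require Import zify ring.
From Stdlib Require Import FunctionalExtensionality.
Set Implicit Arguments. Unset Strict Implicit. Unset Printing Implicit Defensive.
Import GRing.Theory.
Local Open Scope ring_scope.

Lemma lc_nil (F : fieldType) b : lc (F:=F) [::] b = 0.
Proof. by rewrite /lc big_nil. Qed.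

Lemma lc_cons (F : fieldType) (x : F * basis) l b :
  lc (x :: l) b = (if x.2 == b then x.1 else 0) + lc l b.
Proof. by rewrite /lc big_cons. Qed.

Lemma lc_cat (F : fieldType) (l1 l2 : fsum F) b : lc (l1 ++ l2) b = lc l1 b + lc l2 b.
Proof. by rewrite /lc big_cat. Qed.

Lemma lc_scl (F : fieldType) (c : F) l b : lc (scl c l) b = c * lc l b.
Proof.
rewrite /lc /scl big_map mulr_sumr; apply: eq_bigr => x _ /=.
by case: eqP => _; rewrite ?mulr0.
Qed.

Lemma scl_cat (F : fieldType) (c : F) l1 l2 : scl c (l1 ++ l2) = scl c l1 ++ scl c l2.
Proof. by rewrite /scl map_cat. Qed.

Lemma scl_scl (F : fieldType) (c d : F) l : scl c (scl d l) = scl (c * d) l.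
Proof. rewrite /scl -map_comp; apply: eq_map => x /=; by rewrite mulrA. Qed.

Lemma scl_flatten (F : fieldType) (c : F) L : scl c (flatten L) = flatten (map (scl c) L).
Proof. by elim: L => //= l L IH; rewrite scl_cat IH. Qed.

Lemma mulL_cat (F : fieldType) (l1 l2 m : fsum F) : mulL (l1 ++ l2) m = mulL l1 m ++ mulL l2 m.
Proof. by rewrite /mulL map_cat flatten_cat. Qed.

Lemma mulL_cons (F : fieldType) (x : F * basis) l m :
  mulL (x :: l) m = flatten [seq scl (x.1 * y.1) (mulB F x.2 y.2) | y <- m] ++ mulL l m.
Proof. by []. Qed.

Lemma mulL_scl (F : fieldType) (c : F) l m : mulL (scl c l) m = scl c (mulL l m).
Proof.
elim: l => [|x l IH] //.
have -> : scl c (x :: l) = (c * x.1, x.2) :: scl c l by [].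
rewrite !mulL_cons IH scl_cat; congr (_ ++ _).
rewrite scl_flatten -map_comp; congr flatten; apply: eq_map => y /=.
by rewrite scl_scl mulrA.
Qed.

Lemma mulL_nil (F : fieldType) (m : fsum F) : mulL [::] m = [::].
Proof. by []. Qed.

Lemma single_scl (F : fieldType) (x : F * basis) : [:: x] = scl x.1 [:: (1, x.2)].
Proof. by case: x => c y; rewrite /scl /= mulr1. Qed.

Lemma lc_mulL_sum (F : fieldType) (l m : fsum F) b :
  lc (mulL l m) b = \sum_(x <- l) x.1 * lc (mulL [:: (1, x.2)] m) b.
Proof.
elim: l => [|x l IH]; first by rewrite big_nil lc_nil.
rewrite -cat1s mulL_cat lc_cat IH big_cons; congr (_ + _).
by rewrite {1}single_scl mulL_scl lc_scl.
Qed.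

Lemma support_sum (F : fieldType) (G : basis -> F) (l : fsum F) (s : seq basis) :
  uniq s -> {subset map snd l <= s} ->
  \sum_(x <- l) x.1 * G x.2 = \sum_(y <- s) lc l y * G y.
Proof.
move=> us; elim: l => [|x l IH] sub.
  by rewrite big_nil big1 // => y _; rewrite lc_nil mul0r.
rewrite big_cons IH; last by move=> y hy; apply: sub; rewrite /= inE hy orbT.
have xs : x.2 \in s by apply: sub; rewrite /= inE eqxx.
under [in RHS]eq_bigr do rewrite lc_cons mulrDl.
rewrite big_split /=; congr (_ + _).
rewrite (bigD1_seq x.2) //= eqxx big1 ?addr0 // => y; rewrite eq_sym => /negbTE ->; by rewrite mul0r.
Qed.

Lemma lc_sum_wd (F : fieldType) (G : basis -> F) (l l' : fsum F) :
  lc l =1 lc l' ->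
  \sum_(x <- l) x.1 * G x.2 = \sum_(x <- l') x.1 * G x.2.
Proof.
move=> e; set s := undup (map snd (l ++ l')).
have us : uniq s by apply: undup_uniq.
rewrite (support_sum G (l:=l) us) ?(support_sum G (l:=l') us); last first.
- by move=> y hy; rewrite mem_undup map_cat mem_cat hy ?orbT.
- by move=> y hy; rewrite mem_undup map_cat mem_cat hy ?orbT.
by apply: eq_bigr => y _; rewrite e.
Qed.

Lemma mulL_wd (F : fieldType) (l l' m : fsum F) :
  lc l =1 lc l' -> lc (mulL l m) =1 lc (mulL l' m).
Proof.
move=> e b; rewrite !lc_mulL_sum.
exact: (lc_sum_wd (fun y => lc (mulL [:: (1, y)] m) b) e).
Qed.

Definition M (F : fieldType) (i : int) (l : fsum F) := mulL l (av F i).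

Lemma lc_M1 (F : fieldType) (x : basis) i b :
  lc (mulL [:: (1, x)] (av F i)) b = lc (mulB F x (bA i)) b.
Proof.
have -> : mulL [:: (1,x)] (av F i) = (scl (1*1) (mulB F x (bA i)) ++ [::]) ++ [::] by [].
by rewrite !cats0 lc_scl !mul1r.
Qed.

Lemma lc_M (F : fieldType) i (l : fsum F) b :
  lc (M i l) b = \sum_(x <- l) x.1 * lc (mulB F x.2 (bA i)) b.
Proof. by rewrite /M lc_mulL_sum; apply: eq_bigr => x _; rewrite lc_M1. Qed.

Lemma M_cat (F : fieldType) i (l1 l2 : fsum F) : M i (l1 ++ l2) = M i l1 ++ M i l2.
Proof. exact: mulL_cat. Qed.

Lemma M_scl (F : fieldType) i c (l : fsum F) : M i (scl c l) = scl c (M i l).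
Proof. exact: mulL_scl. Qed.

Lemma M_nil (F : fieldType) i : M i ([::] : fsum F) = [::].
Proof. by []. Qed.

Lemma pv_mod (F : fieldType) (q1 q2 : int) k :
  (q1 %% 3)%Z = (q2 %% 3)%Z -> pv F q1 k = pv F q2 k.
Proof. by rewrite /pv => ->. Qed.

Lemma pv_nil (F : fieldType) q k : ~~ ((0 < k)%N && (3 %| k)%N) -> pv F q k = [::].
Proof. by rewrite /pv => /negbTE ->. Qed.

Definition P1 (F : fieldType) k : fsum F := [:: (1, bP false (k %/ 3).-1)].
Definition P2 (F : fieldType) k : fsum F := [:: (1, bP true (k %/ 3).-1)].

Lemma lc_pv (F : fieldType) q k b :
  lc (pv F q k) b =
  if (0 < k)%N && (3 %| k)%N then
    (if (q %% 3)%Z == 0 then - lc (P1 F k) b - lc (P2 F k) b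
     else if (q %% 3)%Z == 1 then lc (P1 F k) b else lc (P2 F k) b)
  else 0.
Proof.
rewrite /pv; case: ifP => _; last by rewrite lc_nil.
have : ((q %% 3)%Z = 0 \/ (q %% 3)%Z = 1 \/ (q %% 3)%Z = 2) by lia.
case=> [->|[->|->]] /=; rewrite /P1 /P2 !lc_cons !lc_nil /=.
- by case: eqP => _; case: eqP => _; rewrite ?addr0 ?subr0 ?sub0r ?opprK //; ring.
- by [].
- by [].
Qed.

Lemma pv_sum3 (F : fieldType) a k b :
  lc (pv F a k) b + lc (pv F (a + 1) k) b + lc (pv F (a + 2) k) b = 0.
Proof.
rewrite !lc_pv; case: ifP => _; last by rewrite !addr0.
have : ((a %% 3)%Z = 0 \/ (a %% 3)%Z = 1 \/ (a %% 3)%Z = 2) by lia.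
case=> [h|[h|h]].
- have -> : ((a + 1) %% 3)%Z = 1 by lia.
  have -> : ((a + 2) %% 3)%Z = 2 by lia.
  rewrite h /=; ring.
- have -> : ((a + 1) %% 3)%Z = 2 by lia.
  have -> : ((a + 2) %% 3)%Z = 0 by lia.
  rewrite h /=; ring.
- have -> : ((a + 1) %% 3)%Z = 0 by lia.
  have -> : ((a + 2) %% 3)%Z = 1 by lia.
  rewrite h /=; ring.
Qed.

Lemma pv0 (F : fieldType) q k : (0 < k)%N && (3 %| k)%N -> (q %% 3)%Z = 0 ->
  pv F q k = [:: (-1, bP false (k %/ 3).-1); (-1, bP true (k %/ 3).-1)].
Proof. by rewrite /pv => -> ->. Qed.
Lemma pv1 (F : fieldType) q k : (0 < k)%N && (3 %| k)%N -> (q %% 3)%Z = 1 ->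
  pv F q k = [:: (1, bP false (k %/ 3).-1)].
Proof. by rewrite /pv => -> ->. Qed.
Lemma pv2 (F : fieldType) q k : (0 < k)%N && (3 %| k)%N -> (q %% 3)%Z = 2 ->
  pv F q k = [:: (1, bP true (k %/ 3).-1)].
Proof. by rewrite /pv => -> ->. Qed.

Lemma k3E k : (0 < k)%N && (3 %| k)%N -> (3 * (k %/ 3).-1.+1)%N = k.
Proof.
case/andP => k0 /dvdnP [m e]; subst k.
rewrite mulnK //; case: m k0 => [|m] //= _; by rewrite mulnC.
Qed.

Lemma MP (F : fieldType) i (rb : bool) k b :
  (0 < k)%N && (3 %| k)%N ->
  lc (mulB F (bP rb (k %/ 3).-1) (bA i)) b =
  3%:R / 2%:R * lc (pv F (if rb then 2 else 1) k) b
  - lc (pv F (- (i + (if rb then 2 else 1))) k) b.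
Proof.
move=> h.
have -> : mulB F (bP rb (k %/ 3).-1) (bA i) =
   scl (3%:R / 2%:R) (pv F (if rb then 2 else 1) (3 * (k %/ 3).-1.+1))
   ++ scl (-1) (pv F (- (i + (if rb then 2 else 1))) (3 * (k %/ 3).-1.+1)).
  by case: rb.
by rewrite k3E // lc_cat !lc_scl mulN1r.
Qed.

Lemma sum3E (F : fieldType) (x0 x1 x2 : F) : x0 + x1 + x2 = 0 -> x0 = - x1 - x2.
Proof. by move/eqP; rewrite -addrA addr_eq0 => /eqP ->; rewrite opprD. Qed.

Lemma Mpv (F : fieldType) i q k b :
  lc (M i (pv F q k)) b = 3%:R / 2%:R * lc (pv F q k) b - lc (pv F (- (i + q)) k) b.
Proof.
case h: ((0 < k)%N && (3 %| k)%N); last first.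
  by rewrite !pv_nil ?h // M_nil !lc_nil; ring.
have : ((q %% 3)%Z = 0 \/ (q %% 3)%Z = 1 \/ (q %% 3)%Z = 2) by lia.
case=> [e|[e|e]].
- rewrite [in LHS](pv0 _ h e) lc_M !big_cons big_nil /= !(k3E h) !lc_cat !lc_scl.
  have H1 := pv_sum3 F 0 k b; rewrite !add0r in H1.
  have H2 := pv_sum3 F (- i) k b.
  rewrite (@pv_mod F (- (i + q)) (- i)); last by lia.
  rewrite (@pv_mod F q 0); last by lia.
  rewrite (@pv_mod F (- (i + 1)) (- i + 2)); last by lia.
  rewrite (@pv_mod F (- (i + 2)) (- i + 1)); last by lia.
  rewrite (sum3E H1) (sum3E H2); ring.
- rewrite [in LHS](pv1 _ h e) lc_M !big_cons big_nil /= !(k3E h) !lc_cat !lc_scl.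
  rewrite (@pv_mod F (- (i + q)) (- (i + 1))); last by lia.
  rewrite (@pv_mod F q 1) //; ring.
- rewrite [in LHS](pv2 _ h e) lc_M !big_cons big_nil /= !(k3E h) !lc_cat !lc_scl.
  rewrite (@pv_mod F (- (i + q)) (- (i + 2))); last by lia.
  rewrite (@pv_mod F q 2) //; ring.
Qed.

Lemma zv_shift (F : fieldType) i (d : nat) (s : int) :
  ((s %% 3)%Z = 0 \/ ~~ ((0 < d)%N && (3 %| d)%N)) -> zv F (i + s) d = zv F i d.
Proof.
case=> [hs|hn]; last by rewrite /zv !pv_nil.
rewrite /zv (@pv_mod F (i + s + 1) (i + 1)); last by lia.
rewrite (@pv_mod F (i + s - 1) (i - 1)) //; lia.
Qed.

Lemma zv_shiftd (F : fieldType) i (d : nat) (s : int) : (s = d%:Z \/ s = - d%:Z) ->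
  zv F (i + s) d = zv F i d.
Proof.
move=> hs; apply: zv_shift.
case h: ((0 < d)%N && (3 %| d)%N); last by right.
left; case/andP: h => _ /dvdnP [m e]; subst d; case: hs => ->; lia.
Qed.

Lemma lc_zv (F : fieldType) i d b :
  lc (zv F i d) b = lc (pv F (i + 1) d) b - lc (pv F (i - 1) d) b.
Proof. by rewrite /zv lc_cat lc_scl mulN1r. Qed.

Lemma zv0 (F : fieldType) i : zv F i 0 = [::].
Proof. by []. Qed.

Lemma lc_M_single (F : fieldType) i (c : F) x b :
  lc (M i [:: (c, x)]) b = c * lc (mulB F x (bA i)) b.
Proof. by rewrite lc_M big_cons big_nil addr0. Qed.

Lemma mulB_AA (F : fieldType) k i : mulB F (bA k) (bA i) =
  scl (Defs.half F) (av F k ++ av F i) ++ sv F (absz (k - i)) ++ zv F k (absz (k - i)).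
Proof. by []. Qed.

Lemma mulB_SA (F : fieldType) j i : mulB F (bS j) (bA i) =
      scl (- (3%:R / 4%:R)) (av F i)
      ++ scl (3%:R / 8%:R) (av F (i - j.+1%:Z) ++ av F (i + j.+1%:Z))
      ++ scl (3%:R / 2%:R) (sv F j.+1) ++ scl (-1) (zv F i j.+1).
Proof. by []. Qed.

Lemma Mav (F : fieldType) k i b : lc (M i (av F k)) b =
  Defs.half F * lc (av F k) b + Defs.half F * lc (av F i) b + lc (sv F (absz (k - i))) b
  + lc (zv F k (absz (k - i))) b.
Proof.
rewrite /av lc_M_single mul1r -/(av F k) mulB_AA !lc_cat lc_scl !lc_cat; ring.
Qed.

Lemma Mu1 (F : fieldType) i b : (2%:R : F) != 0 -> lc (M i (av F i)) b = lc (av F i) b.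
Proof.
move=> h2; rewrite Mav subrr /= zv0 !lc_nil /Defs.half; field; exact: h2.
Qed.

Lemma Mu2 (F : fieldType) i (d : nat) (s : int) b : (s = d%:Z \/ s = - d%:Z) ->
  lc (M i (av F (i + s))) b =
  Defs.half F * lc (av F (i + s)) b + Defs.half F * lc (av F i) b + lc (sv F d) b + lc (zv F i d) b.
Proof.
move=> hs; rewrite Mav.
have -> : absz (i + s - i)%R = d by case: hs => ->; rewrite addrAC subrr add0r ?abszN.
by rewrite zv_shiftd.
Qed.

Lemma Mu4 (F : fieldType) i (d : nat) b : (2%:R : F) != 0 ->
  lc (M i (sv F d)) b =
  - (3%:R / 4%:R) * lc (av F i) b + 3%:R / 8%:R * lc (av F (i - d%:Z)) b
  + 3%:R / 8%:R * lc (av F (i + d%:Z)) b + 3%:R / 2%:R * lc (sv F d) b - lc (zv F i d) b.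
Proof.
move=> h2; case: d => [|j].
  rewrite (_ : i + 0%N%:Z = i); last by lia.
  rewrite zv0 /= M_nil !lc_nil.
  have h4 : (4%:R : F) != 0 by rewrite (_ : 4 = 2 * 2)%N // natrM mulf_neq0.
  have h8 : (8%:R : F) != 0 by rewrite (_ : 8 = 2 * 4)%N // natrM mulf_neq0.
  field; apply/and3P; split; [exact: h2|exact: h8|exact: h4].
have e : sv F j.+1 = [:: (1, bS j)] by [].
rewrite [in LHS]e lc_M_single mul1r mulB_SA !lc_cat !lc_scl !lc_cat ?lc_scl ?lc_zv; ring.
Qed.

Lemma Mu5 (F : fieldType) i (d : nat) b : (2%:R : F) != 0 ->
  lc (M i (zv F i d)) b = 5%:R / 2%:R * lc (zv F i d) b.
Proof.
move=> h2; rewrite [in RHS]lc_zv [in LHS]/zv M_cat M_scl !lc_cat !lc_scl !Mpv.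
rewrite (@pv_mod F (- (i + (i + 1))) (i - 1)); last by lia.
rewrite (@pv_mod F (- (i + (i - 1))) (i + 1)); last by lia.
field; exact: h2.
Qed.

Lemma nz4 (F : fieldType) : (2%:R : F) != 0 -> (4%:R : F) != 0.
Proof. by move=> h2; rewrite (_ : 4 = 2 * 2)%N // natrM mulf_neq0. Qed.
Lemma nz8 (F : fieldType) : (2%:R : F) != 0 -> (8%:R : F) != 0.
Proof. by move=> h2; rewrite (_ : 8 = 2 * 4)%N // natrM mulf_neq0 // nz4. Qed.

Ltac fld h2 := field; repeat (apply/andP; split);
  first [exact: h2 | exact: (nz4 h2) | exact: (nz8 h2)].

Lemma iterM_wd (F : fieldType) i n (l l' : fsum F) :
  lc l =1 lc l' -> lc (iter n (M i) l) =1 lc (iter n (M i) l').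
Proof. by elim: n => [|n IH] //= e; apply: mulL_wd; apply: IH. Qed.

Lemma iterE (F : fieldType) (T : Type) i (E : T -> fsum F) (A : T -> T) :
  (forall c, lc (M i (E c)) =1 lc (E (A c))) ->
  forall n c, lc (iter n (M i) (E c)) =1 lc (E (iter n A c)).
Proof.
move=> h; elim=> [|n IH] c //= b.
rewrite -h; exact: (mulL_wd (av F i) (IH c) b).
Qed.

Definition Ql (F : fieldType) i (l : fsum F) : fsum F :=
  scl 4%:R (iter 4 (M i) l) ++ scl (- 20%:R) (iter 3 (M i) l)
  ++ scl 29%:R (iter 2 (M i) l) ++ scl (- 10%:R) (iter 1 (M i) l).

Lemma Ql_wd (F : fieldType) i (l l' : fsum F) : lc l =1 lc l' -> lc (Ql i l) =1 lc (Ql i l').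
Proof.
move=> e b; rewrite /Ql !lc_cat !lc_scl.
by rewrite !(iterM_wd _ _ e).
Qed.

Definition F5 (F : fieldType) := (F * F * F * F * F)%type.

Definition E5 (F : fieldType) i (d : nat) (c : F5 F) : fsum F :=
  scl c.1.1.1.1 (av F i) ++ scl c.1.1.1.2 (av F (i + d%:Z)) ++ scl c.1.1.2 (av F (i - d%:Z))
  ++ scl c.1.2 (sv F d) ++ scl c.2 (zv F i d).

Definition A5 (F : fieldType) (c : F5 F) : F5 F :=
  let: (c1, c2, c3, c4, c5) := c in
  (c1 + Defs.half F * c2 + Defs.half F * c3 - 3%:R / 4%:R * c4,
   Defs.half F * c2 + 3%:R / 8%:R * c4,
   Defs.half F * c3 + 3%:R / 8%:R * c4,
   c2 + c3 + 3%:R / 2%:R * c4,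
   c2 + c3 - c4 + 5%:R / 2%:R * c5).

Lemma lc_E5 (F : fieldType) i d c b : lc (E5 i d c) b =
  c.1.1.1.1 * lc (av F i) b + c.1.1.1.2 * lc (av F (i + d%:Z)) b
  + c.1.1.2 * lc (av F (i - d%:Z)) b + c.1.2 * lc (sv F d) b + c.2 * lc (zv F i d) b.
Proof.
rewrite /E5.
rewrite [in LHS]lc_cat [in LHS]lc_cat [in LHS]lc_cat [in LHS]lc_cat !lc_scl.
by rewrite !addrA.
Qed.

Lemma ME5 (F : fieldType) i d (h2 : (2%:R : F) != 0) (c : F5 F) :
  lc (M i (E5 i d c)) =1 lc (E5 i d (A5 c)).
Proof.
move=> b; case: c => [[[[c1 c2] c3] c4] c5].
rewrite lc_E5 /E5 !M_cat !M_scl.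
rewrite [in LHS]lc_cat [in LHS]lc_cat [in LHS]lc_cat [in LHS]lc_cat !lc_scl.
rewrite Mu1 // (@Mu2 F i d d%:Z) ?(@Mu2 F i d (- d%:Z)); [|by right|by left].
rewrite Mu4 // Mu5 //.
cbn [fst snd A5]; rewrite /Defs.half.
fld h2.
Qed.

Lemma Q5 (F : fieldType) (h2 : (2%:R : F) != 0) i d (c : F5 F) b :
  lc (Ql i (E5 i d c)) b =
  lc (E5 i d (4%:R * (iter 4 (@A5 F) c).1.1.1.1 - 20%:R * (iter 3 (@A5 F) c).1.1.1.1
     + 29%:R * (iter 2 (@A5 F) c).1.1.1.1 - 10%:R * (iter 1 (@A5 F) c).1.1.1.1,
     4%:R * (iter 4 (@A5 F) c).1.1.1.2 - 20%:R * (iter 3 (@A5 F) c).1.1.1.2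
     + 29%:R * (iter 2 (@A5 F) c).1.1.1.2 - 10%:R * (iter 1 (@A5 F) c).1.1.1.2,
     4%:R * (iter 4 (@A5 F) c).1.1.2 - 20%:R * (iter 3 (@A5 F) c).1.1.2
     + 29%:R * (iter 2 (@A5 F) c).1.1.2 - 10%:R * (iter 1 (@A5 F) c).1.1.2,
     4%:R * (iter 4 (@A5 F) c).1.2 - 20%:R * (iter 3 (@A5 F) c).1.2
     + 29%:R * (iter 2 (@A5 F) c).1.2 - 10%:R * (iter 1 (@A5 F) c).1.2,
     4%:R * (iter 4 (@A5 F) c).2 - 20%:R * (iter 3 (@A5 F) c).2
     + 29%:R * (iter 2 (@A5 F) c).2 - 10%:R * (iter 1 (@A5 F) c).2)) b.
Proof.
rewrite /Ql !lc_cat !lc_scl !(iterE (ME5 i d h2)) !lc_E5; cbn [fst snd].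
ring.
Qed.

Lemma Q_au (F : fieldType) (h2 : (2%:R : F) != 0) i d b :
  lc (Ql i (av F (i + d%:Z))) b = 3%:R * lc (av F i) b.
Proof.
have e : lc (av F (i + d%:Z)) =1 lc (E5 i d (0, 1, 0, 0, 0)).
  by move=> b'; rewrite lc_E5; cbn [fst snd]; ring.
rewrite (Ql_wd _ e) Q5 // lc_E5; cbn [fst snd iter A5]; rewrite /Defs.half; fld h2.
Qed.

Lemma Q_ad (F : fieldType) (h2 : (2%:R : F) != 0) i d b :
  lc (Ql i (av F (i - d%:Z))) b = 3%:R * lc (av F i) b.
Proof.
have e : lc (av F (i - d%:Z)) =1 lc (E5 i d (0, 0, 1, 0, 0)).
  by move=> b'; rewrite lc_E5; cbn [fst snd]; ring.
rewrite (Ql_wd _ e) Q5 // lc_E5; cbn [fst snd iter A5]; rewrite /Defs.half; fld h2.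
Qed.

Lemma Q_sv (F : fieldType) (h2 : (2%:R : F) != 0) i d b :
  lc (Ql i (sv F d)) b = 0.
Proof.
have e : lc (sv F d) =1 lc (E5 i d (0, 0, 0, 1, 0)).
  by move=> b'; rewrite lc_E5; cbn [fst snd]; ring.
rewrite (Ql_wd _ e) Q5 // lc_E5; cbn [fst snd iter A5]; rewrite /Defs.half; fld h2.
Qed.

Definition E2 (F : fieldType) i (r : int) k (c : F * F) : fsum F :=
  scl c.1 (pv F r k) ++ scl c.2 (pv F (- (i + r)) k).

Definition A2 (F : fieldType) (c : F * F) : F * F :=
  (3%:R / 2%:R * c.1 - c.2, - c.1 + 3%:R / 2%:R * c.2).

Lemma lc_E2 (F : fieldType) i r k (c : F * F) b :
  lc (E2 i r k c) b = c.1 * lc (pv F r k) b + c.2 * lc (pv F (- (i + r)) k) b.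
Proof. by rewrite /E2 lc_cat !lc_scl. Qed.

Lemma ME2 (F : fieldType) i r k (c : F * F) :
  lc (M i (E2 i r k c)) =1 lc (E2 i r k (A2 c)).
Proof.
move=> b; rewrite lc_E2 /E2 M_cat !M_scl lc_cat !lc_scl !Mpv.
rewrite (_ : - (i + - (i + r)) = r); last by ring.
cbn [fst snd A2]; ring.
Qed.

Lemma Q_pv (F : fieldType) (h2 : (2%:R : F) != 0) i r k b :
  lc (Ql i (pv F r k)) b = 0.
Proof.
have e : lc (pv F r k) =1 lc (E2 i r k (1, 0)).
  by move=> b'; rewrite lc_E2; cbn [fst snd]; ring.
rewrite (Ql_wd _ e) /Ql !lc_cat !lc_scl !(iterE (@ME2 F i r k)) !lc_E2.
cbn [fst snd iter A2]; fld h2.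
Qed.

Lemma iter_cat (F : fieldType) i n (l1 l2 : fsum F) :
  iter n (M i) (l1 ++ l2) = iter n (M i) l1 ++ iter n (M i) l2.
Proof. by elim: n => //= n ->; rewrite M_cat. Qed.

Lemma iter_scl (F : fieldType) i n c (l : fsum F) :
  iter n (M i) (scl c l) = scl c (iter n (M i) l).
Proof. by elim: n => //= n ->; rewrite M_scl. Qed.

Lemma iter_nil (F : fieldType) i n : iter n (M i) ([::] : fsum F) = [::].
Proof. by elim: n => //= n ->. Qed.

Lemma Ql_sum (F : fieldType) i (l : fsum F) b :
  lc (Ql i l) b = \sum_(x <- l) x.1 * lc (Ql i [:: (1, x.2)]) b.
Proof.
elim: l => [|x l IH].
  by rewrite big_nil /Ql !iter_nil /= lc_nil.
rewrite big_cons -IH -cat1s {1}single_scl /Ql !iter_cat !iter_scl !lc_cat !lc_scl.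
rewrite !(lc_cat (scl _ _)) !lc_scl; ring.
Qed.

Definition isA (F : fieldType) (y : basis) : F := if y is inl (inl _) then 1 else 0.
Definition phiL (F : fieldType) (l : fsum F) : F := \sum_(x <- l) x.1 * isA F x.2.

Lemma pvP (F : fieldType) (rb : bool) k :
  pv F (if rb then 2 else 1) (3 * k.+1) = [:: (1, bP rb k)].
Proof.
rewrite /pv muln_gt0 dvdn_mulr //= mulKn //=.
by case: rb.
Qed.

Lemma Q_basis (F : fieldType) (h2 : (2%:R : F) != 0) i (y : basis) b :
  lc (Ql i [:: (1, y)]) b = 3%:R * isA F y * lc (av F i) b.
Proof.
case: y => [[k|j]|[rb k]].
- have [d [->|->]] : exists d : nat, k = i + d%:Z \/ k = i - d%:Z.
    by exists (absz (k - i)); lia.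
  + by rewrite (_ : [:: _] = av F (i + d%:Z)) // Q_au // /isA mulr1.
  + by rewrite (_ : [:: _] = av F (i - d%:Z)) // Q_ad // /isA mulr1.
- by rewrite (_ : [:: _] = sv F j.+1) // Q_sv // /isA mulr0 mul0r.
- by rewrite -pvP Q_pv // /isA mulr0 mul0r.
Qed.

Lemma Q_list (F : fieldType) (h2 : (2%:R : F) != 0) i (l : fsum F) b :
  lc (Ql i l) b = 3%:R * phiL l * lc (av F i) b.
Proof.
rewrite Ql_sum /phiL mulr_sumr mulr_suml; apply: eq_bigr => x _.
rewrite Q_basis //; ring.
Qed.


Lemma J_ext (F : fieldType) (J : vec F -> Prop) (l l' : fsum F) :
  lc l =1 lc l' -> J (lc l) -> J (lc l').
Proof. by move=> e; rewrite (functional_extensionality _ _ e). Qed.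

Lemma J_cat (F : fieldType) (J : vec F -> Prop) (l1 l2 : fsum F) :
  is_idealH J -> J (lc l1) -> J (lc l2) -> J (lc (l1 ++ l2)).
Proof.
case=> _ _ hadd _ _ h1 h2.
have -> : lc (l1 ++ l2) = (fun b => lc l1 b + lc l2 b).
  by apply: functional_extensionality => b; rewrite lc_cat.
exact: hadd.
Qed.

Lemma J_scl (F : fieldType) (J : vec F -> Prop) c (l : fsum F) :
  is_idealH J -> J (lc l) -> J (lc (scl c l)).
Proof.
case=> _ _ _ hsc _ h.
have -> : lc (scl c l) = (fun b => c * lc l b).
  by apply: functional_extensionality => b; rewrite lc_scl.
exact: hsc.
Qed.

Lemma J_iter (F : fieldType) (J : vec F -> Prop) i n (l : fsum F) :
  is_idealH J -> J (lc l) -> J (lc (iter n (M i) l)).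
Proof.
move=> hJ h; elim: n => //= n IH.
by case: hJ => _ _ _ _ hm; apply: hm.
Qed.

Lemma J_Ql (F : fieldType) (J : vec F -> Prop) i (l : fsum F) :
  is_idealH J -> J (lc l) -> J (lc (Ql i l)).
Proof.
move=> hJ h; rewrite /Ql.
by do 3 (apply: J_cat => //; first by apply: J_scl => //; apply: J_iter);
   apply: J_scl => //; apply: J_iter.
Qed.

Lemma J_axis (F : fieldType) (h2 : (2%:R : F) != 0) (h3 : (3%:R : F) != 0)
  (J : vec F -> Prop) (l : fsum F) i :
  is_idealH J -> J (lc l) -> phiL l != 0 -> J (axis F i).
Proof.
move=> hJ h hp.
have := J_scl ((3%:R * phiL l)^-1) hJ (J_Ql i hJ h).
apply: J_ext => b; rewrite lc_scl Q_list // mulrA mulVf ?mul1r //.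
by rewrite mulf_neq0.
Qed.

Lemma J_T (F : fieldType) (J : vec F -> Prop) (k : int) (j : nat) :
  is_idealH J -> (forall i, J (axis F i)) -> J (lc (sv F j ++ zv F k j)).
Proof.
move=> hJ hax.
have h1 : J (lc (mulL (av F k) (av F (k + j%:Z)))).
  by case: hJ => _ _ _ _ hm; apply: hm; apply: hax.
have h2 : J (lc (scl (- Defs.half F) (av F k ++ av F (k + j%:Z)))).
  by apply: J_scl => //; apply: J_cat => //; apply: hax.
have := J_cat hJ h1 h2; apply: J_ext => b.
rewrite lc_cat lc_M1 mulB_AA.
have -> : absz (k - (k + j%:Z))%R = j by rewrite opprD addrA subrr add0r abszN.
rewrite lc_cat lc_scl lc_cat lc_scl (lc_cat (av F k)); ring.
Qed.

Lemma J_sv (F : fieldType) (h3 : (3%:R : F) != 0) (J : vec F -> Prop) (j : nat) :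
  is_idealH J -> (forall i, J (axis F i)) -> J (lc (sv F j)).
Proof.
move=> hJ hax.
have h := J_cat hJ (J_T 0 j hJ hax) (J_cat hJ (J_T 1 j hJ hax) (J_T 2 j hJ hax)).
have := J_scl (3%:R)^-1 hJ h; apply: J_ext => b.
rewrite lc_scl lc_cat (lc_cat (sv F j ++ zv F 1 j)) !(lc_cat (sv F j)) !lc_zv.
rewrite (@pv_mod F (0 - 1) 2) // (@pv_mod F (2 + 1) 0) //.
rewrite (_ : (0 : int) + 1 = 1) // (_ : (1 : int) + 1 = 2) // (_ : (1 : int) - 1 = 0) //.
rewrite (_ : (2 : int) - 1 = 1) //.
field; exact: h3.
Qed.

Lemma J_zv (F : fieldType) (h3 : (3%:R : F) != 0) (J : vec F -> Prop) k (j : nat) :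
  is_idealH J -> (forall i, J (axis F i)) -> J (lc (zv F k j)).
Proof.
move=> hJ hax.
have := J_cat hJ (J_T k j hJ hax) (J_scl (-1) hJ (J_sv h3 j hJ hax)).
apply: J_ext => b; rewrite lc_cat (lc_cat (sv F j)) lc_scl; ring.
Qed.

Lemma J_P (F : fieldType) (h3 : (3%:R : F) != 0) (J : vec F -> Prop) rb k :
  is_idealH J -> (forall i, J (axis F i)) -> J (lc [:: (1, bP rb k)]).
Proof.
move=> hJ hax.
have z0 := J_zv h3 0 (3 * k.+1) hJ hax.
have z1 := J_zv h3 1 (3 * k.+1) hJ hax.
have H := pv_sum3 F 0 (3 * k.+1).
rewrite -pvP; case: rb.
- have := J_scl (3%:R)^-1 hJ (J_cat hJ z1 (J_scl (-1) hJ z0)).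
  apply: J_ext => b; rewrite lc_scl lc_cat lc_scl !lc_zv.
  rewrite (@pv_mod F (0 - 1) 2) // (_ : (0 : int) + 1 = 1) // (_ : (1 : int) + 1 = 2) //.
  rewrite (_ : (1 : int) - 1 = 0) //.
  have := H b; rewrite !add0r => /sum3E ->; field; exact: h3.
- have := J_scl (3%:R)^-1 hJ (J_cat hJ z1 (J_scl 2%:R hJ z0)).
  apply: J_ext => b; rewrite lc_scl lc_cat lc_scl !lc_zv.
  rewrite (@pv_mod F (0 - 1) 2) // (_ : (0 : int) + 1 = 1) // (_ : (1 : int) + 1 = 2) //.
  rewrite (_ : (1 : int) - 1 = 0) //.
  have := H b; rewrite !add0r => /sum3E ->; field; exact: h3.
Qed.

Lemma J_list (F : fieldType) (h3 : (3%:R : F) != 0) (J : vec F -> Prop) (l : fsum F) :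
  is_idealH J -> (forall i, J (axis F i)) -> J (lc l).
Proof.
move=> hJ hax; elim: l => [|x l IH].
  have -> : lc (F:=F) [::] = (fun _ => 0) by apply: functional_extensionality => b; rewrite lc_nil.
  by case: hJ.
rewrite -cat1s; apply: J_cat => //; rewrite single_scl; apply: J_scl => //.
case: x => c [[k|j]|[rb k]] /=.
- exact: hax.
- exact: (J_sv h3 j.+1 hJ hax).
- exact: J_P.
Qed.

Lemma phiL_cat (F : fieldType) (l1 l2 : fsum F) : phiL (l1 ++ l2) = phiL l1 + phiL l2.
Proof. by rewrite /phiL big_cat. Qed.

Lemma phiL_scl (F : fieldType) (c : F) l : phiL (scl c l) = c * phiL l.
Proof. by rewrite /phiL /scl big_map mulr_sumr; apply: eq_bigr => x _ /=; rewrite mulrA. Qed.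

Lemma phiL_nil (F : fieldType) : phiL ([::] : fsum F) = 0.
Proof. by rewrite /phiL big_nil. Qed.

Lemma phiL_av (F : fieldType) k : phiL (av F k) = 1.
Proof. by rewrite /phiL big_cons big_nil /= mulr1 addr0. Qed.

Lemma phiL_sv (F : fieldType) d : phiL (sv F d) = 0.
Proof. by case: d => [|d]; rewrite /phiL ?big_cons big_nil //= mulr0 addr0. Qed.

Lemma phiL_pv (F : fieldType) q k : phiL (pv F q k) = 0.
Proof.
rewrite /phiL /pv; case: ifP => _; last by rewrite big_nil.
case: (absz (q %% 3)%Z) => [|[|n]]; rewrite !big_cons big_nil /= !mulr0 ?addr0 //.
Qed.

Lemma phiL_zv (F : fieldType) q k : phiL (zv F q k) = 0.
Proof. by rewrite /zv phiL_cat phiL_scl !phiL_pv mulr0 addr0. Qed.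

Lemma phiL_mulB (F : fieldType) (h2 : (2%:R : F) != 0) x y :
  phiL (mulB F x y) = isA F x * isA F y.
Proof.
case: x => [[k|j]|[rb k]]; case: y => [[k'|j']|[rb' k']]; cbn [mulB isA];
  rewrite ?phiL_cat ?phiL_scl ?phiL_cat ?phiL_av ?phiL_sv ?phiL_zv ?phiL_pv;
  rewrite ?phiL_cat ?phiL_scl ?phiL_pv;
  rewrite /Defs.half; try fld h2.
Qed.

Lemma phiL_flat (F : fieldType) (T : Type) (f : T -> fsum F) (m : seq T) :
  phiL (flatten [seq f y | y <- m]) = \sum_(y <- m) phiL (f y).
Proof.
elim: m => [|y m IH]; first by rewrite big_nil phiL_nil.
by rewrite /= phiL_cat IH big_cons.
Qed.

Lemma phiL_cons (F : fieldType) (x : F * basis) l : phiL (x :: l) = x.1 * isA F x.2 + phiL l.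
Proof. by rewrite /phiL big_cons. Qed.

Lemma phiL_mulL (F : fieldType) (h2 : (2%:R : F) != 0) (l m : fsum F) :
  phiL (mulL l m) = phiL l * phiL m.
Proof.
elim: l => [|x l IH]; first by rewrite mulL_nil phiL_nil mul0r.
rewrite mulL_cons phiL_cat IH phiL_flat phiL_cons mulrDl; congr (_ + _).
rewrite /phiL mulr_sumr; apply: eq_bigr => y _.
rewrite -/(phiL _) phiL_scl phiL_mulB //; ring.
Qed.

Lemma phiL_wd (F : fieldType) (l l' : fsum F) : lc l =1 lc l' -> phiL l = phiL l'.
Proof. exact: lc_sum_wd. Qed.

Lemma J_full (F : fieldType) (h2 : (2%:R : F) != 0) (h3 : (3%:R : F) != 0)
  (J : vec F -> Prop) (l : fsum F) :
  is_idealH J -> J (lc l) -> phiL l != 0 -> forall v, inH v -> J v.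
Proof.
move=> hJ h hp v [l' ->].
exact: (J_list h3 l' hJ (fun i => J_axis h2 h3 i hJ h hp)).
Qed.

Theorem corollary5p3 (F : fieldType)
  (h2 : (2%:R : F) != 0) (h3 : (3%:R : F) != 0) :
  exists R : vec F -> Prop,
    is_radical R /\
    forall J : vec F -> Prop, proper_idealH J ->
      (forall v, J v -> R v) /\ axis_free J.
Proof.
pose R := fun v : vec F => exists l : fsum F, v = lc l /\ phiL l = 0.
have Rid : is_idealH R.
  split.
  - by move=> v [l [-> _]]; exists l.
  - exists [::]; split; last exact: phiL_nil.
    by apply: functional_extensionality => b; rewrite lc_nil.
  - move=> u v [l1 [-> p1]] [l2 [-> p2]]; exists (l1 ++ l2); split.
      by apply: functional_extensionality => b; rewrite lc_cat.
    by rewrite phiL_cat p1 p2 addr0.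
  - move=> c u [l [-> p]]; exists (scl c l); split.
      by apply: functional_extensionality => b; rewrite lc_scl.
    by rewrite phiL_scl p mulr0.
  - move=> l m [l0 [e p]]; exists (mulL l m); split => //.
    rewrite phiL_mulL // (@phiL_wd F l l0) ?p ?mul0r // => b; by rewrite e.
have Rax : axis_free R.
  move=> i [l [e p]].
  have := @phiL_wd F (av F i) l (fun b => f_equal (fun f => f b) e).
  by rewrite phiL_av p => /eqP; rewrite oner_eq0.
have in_R : forall J : vec F -> Prop, is_idealH J -> forall v, J v ->
    R v \/ (forall w, inH w -> J w).
  move=> J hJ v hv.
  have hJ' := hJ; case: hJ' => hin _ _ _ _.
  have [l el] := hin v hv.
  case: (eqVneq (phiL l) 0) => p; first by left; exists l.
  right; apply: (J_full h2 h3 hJ _ p); by rewrite -el.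
exists R; split.
  split => // J hJ hJax v hv.
  case: (in_R J hJ v hv) => // hall.
  by case: (hJax 0); apply: hall; exists (av F 0).
move=> J [hJ [w [hw nw]]]; split.
  move=> v hv; case: (in_R J hJ v hv) => // hall.
  by case: nw; apply: hall.
move=> i hi; apply: nw.
apply: (J_full h2 h3 (l := av F i) hJ hi) => //.
by rewrite phiL_av oner_eq0.
Qed.
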